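(* Let $G$ be a simple stochastic game, let $A$ be a subset of the arcs of $G$, and let $\sigma$ be a positional $\text{MAX}$ strategy. Then $K^{G}_{\sigma} = K^{G[A,\sigma]}_{\sigma}$, i.e. a vertex $x$ of $G$ satisfies $v^G_\sigma(x)=0$ if and only if $v^{G[A,\sigma]}_\sigma(x)=0$.
   Context: A simple stochastic game (SSG) $G$ is a finite directed graph whose vertex set $V$ is partitioned into $V_{\max}$ (MAX vertices), $V_{\min}$ (MIN vertices), $V_R$ (random vertices) and a nonempty set $V_S$ (sinks); every vertex of $V_{\max}\cup V_{\min}\cup V_R$ has at least one outgoing arc, every sink has exactly one outgoing arc, which is a self-loop; each random vertex $x$ carries a probability distribution $p_x$ with rational values on its out-neighbourhood $N^+(x)$, with $p_x(y)>0$ for all $y\in N^+(x)$; each sink $s$ has a rational value $\mathrm{Val}(s)\in[0,1]$. A positional MAX (resp. MIN) strategy is a map $\sigma$ (resp. $\tau$) assigning to each MAX (resp. MIN) vertex one of its out-neighbours. Given $\sigma,\tau$ and a start vertex $x_0$, the random play $X_0=x_0,X_1,\dots$ is defined by $X_{t+1}=\sigma(X_t)$ if $X_t\in V_{\max}$, $X_{t+1}=\tau(X_t)$ if $X_t\in V_{\min}$, $X_{t+1}$ drawn according to $p_{X_t}$ independently of everything else if $X_t\in V_R$, and $X_{t+1}=X_t$ if $X_t\in V_S$. The value of the play is $\mathrm{Val}(s)$ if the play reaches a sink $s$ and $0$ if it never reaches a sink; $v^G_{\sigma,\tau}(x_0)$ is its expectation. A best response to $\sigma$ is a positional MIN strategy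 $\tau$ with $v_{\sigma,\tau}\le v_{\sigma,\tau'}$ pointwise for all MIN strategies $\tau'$; positional best responses exist, and $v^G_\sigma:=v^G_{\sigma,\tau}$ for any best response $\tau$. $K^G_\sigma$ denotes the set of vertices $x$ with $v^G_\sigma(x)=0$. Transformed game: for a set $A$ of arcs of $G$ and $f:A\to\mathbb{Q}$, $G[A,f]$ is the SSG obtained from a copy of $G$ by replacing each arc $e=(x,y)\in A$ by an arc $(x,s_e)$, where $s_e$ is a new sink with value $f(e)$ (if $x$ is random, $p_x(s_e)=p_x(y)$); the vertex $y$ is kept. $G[A,\sigma]$ denotes $G[A,f]$ with $f((x,y))=v^G_\sigma(y)$. Strategies of $G$ and $G[A,\sigma]$ are identified (a MAX vertex $x$ with $\sigma(x)=y$, $(x,y)\in A$, moves to $s_{(x,y)}$ in $G[A,\sigma]$), and value vectors are compared only on the vertices of $G$. *)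

(* Defs.v *)
From HB Require Import structures.
From mathcomp Require Import all_boot all_order all_algebra.
From mathcomp Require Import all_classical all_reals all_analysis.
Set Implicit Arguments. Unset Strict Implicit. Unset Printing Implicit Defensive.
Import Order.TTheory GRing.Theory Num.Theory.
Local Open Scope ring_scope.

Inductive vkind := VMax | VMin | VRand | VSink.
Definition is_sink_kind (k : vkind) : bool := if k is VSink then true else false.

Record ssg (R : realType) (V : finType) := SSG {
  gkind : V -> vkind;
  garc : rel V;
  gprob : V -> V -> R;       (* p_x(y) for random x (0 outside N^+(x)) *)
  gsval : V -> R
}.

Definition is_rational (R : realType) (r : R) := exists q : rat, r = ratr q.

Definition is_ssg (R : realType) (V : finType) (G : ssg R V) : Prop :=
  [/\ (exists s, gkind G s = VSink),
      (forall x, gkind G x <> VSink -> exists y, garc G x y),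
      (forall s y, gkind G s = VSink -> (garc G s y <-> y = s)),
      (forall x, gkind G x = VRand ->
         [/\ (forall y, garc G x y -> 0 < gprob G x y),
             (forall y, ~~ garc G x y -> gprob G x y = 0),
             \sum_(y | garc G x y) gprob G x y = 1
           & (forall y, is_rational (gprob G x y))])
    & (forall s, gkind G s = VSink ->
         [/\ 0 <= gsval G s, gsval G s <= 1 & is_rational (gsval G s)])].

Definition is_max_strategy R V (G : ssg R V) (sigma : V -> V) :=
  forall x, gkind G x = VMax -> garc G x (sigma x).
Definition is_min_strategy R V (G : ssg R V) (tau : V -> V) :=
  forall x, gkind G x = VMin -> garc G x (tau x).

Definition trans R V (G : ssg R V) (sigma tau : V -> V) (x y : V) : R :=
  match gkind G x with
  | VMax => (sigma x == y)%:R
  | VMin => (tau x == y)%:R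
  | VRand => gprob G x y
  | VSink => (x == y)%:R
  end.

Fixpoint dist R V (G : ssg R V) (sigma tau : V -> V) (x0 : V) (n : nat) : V -> R :=
  match n with
  | 0 => fun y => (x0 == y)%:R
  | n.+1 => fun y => \sum_(x : V) dist G sigma tau x0 n x * trans G sigma tau x y
  end.

(* v_{sigma,tau}(x0): expected gvalue of the play.  Since sinks are absorbing,
   the probability that the play reaches sink s equals lim_n P(X_n = s), and
   plays that never reach a sink contribute 0. *)
Definition gvalue R V (G : ssg R V) (sigma tau : V -> V) (x0 : V) : R :=
  limn (fun n => \sum_(s : V | is_sink_kind (gkind G s)) dist G sigma tau x0 n s * gsval G s).

Definition best_response R V (G : ssg R V) (sigma tau : V -> V) : Prop :=
  is_min_strategy G tau /\
  forall tau', is_min_strategy G tau' ->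
    forall x, gvalue G sigma tau x <= gvalue G sigma tau' x.

(* The transformed game G[A,f]: vertices of G plus one new sink s_e per e in A. *)
Definition tvert (V : finType) (A : {set V * V}) : finType :=
  (V + {e : V * V | e \in A})%type.

Definition transform R (V : finType) (G : ssg R V) (A : {set V * V})
    (f : V * V -> R) : ssg R (tvert A) :=
  @SSG R (tvert A)
    (fun u => match u with inl x => gkind G x | inr _ => VSink end)
    (fun u w => match u, w with
       | inl x, inl y => garc G x y && ((x, y) \notin A)
       | inl x, inr e => (val e).1 == x
       | inr e, inr e' => e == e'
       | inr _, inl _ => false
       end)
    (fun u w => match u, w with
       | inl x, inl y => if (x, y) \in A then 0 else gprob G x y
       | inl x, inr e => if (val e).1 == x then gprob G x (val e).2 else 0
       | inr _, _ => 0
       end)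
    (fun u => match u with inl x => gsval G x | inr e => f (val e) end).

Definition lift_strategy (V : finType) (A : {set V * V}) (sigma : V -> V)
    (u : tvert A) : tvert A :=
  match u with
  | inl x => match insub (x, sigma x) with
             | Some e => inr e
             | None => inl (sigma x)
             end
  | inr e => inr e
  end.
Arguments lift_strategy {V} A sigma u.
Arguments tvert {V} A.

(* Main.v *)
Require Import Defs.
From HB Require Import structures.
From mathcomp Require Import all_boot all_order all_algebra.
From mathcomp Require Import all_classical all_reals all_analysis.
Import Order.TTheory GRing.Theory Num.Theory.
Local Open Scope ring_scope.
Set Implicit Arguments. Unset Strict Implicit.

Section Gen.
Variables (R : realType) (V : finType) (G : ssg R V) (sg tu : V -> V).
Hypothesis Hnn : forall x y, 0 <= trans G sg tu x y.
Hypothesis Hrow : forall x, \sum_y trans G sg tu x y = 1.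
Hypothesis Hval : forall s, is_sink_kind (gkind G s) -> 0 <= gsval G s.

Local Notation D := (dist G sg tu).
Local Notation T := (trans G sg tu).
Definition Ssum x n := \sum_(s | is_sink_kind (gkind G s)) D x n s * gsval G s.

Lemma sum_ind (c : V) : \sum_(b : V) ((c == b)%:R : R) = 1.
Proof.
rewrite (bigD1 c) //= eqxx big1 ?addr0 // => y /negPf.
by rewrite eq_sym => ->.
Qed.

Lemma dist_ge0 x n y : 0 <= D x n y.
Proof.
elim: n y => [|n IH] y /=; first exact: ler0n.
by apply: sumr_ge0 => v _; apply: mulr_ge0.
Qed.

Lemma dist_sum1 x n : \sum_y D x n y = 1.
Proof.
elim: n => [|n IH] /=; first exact: sum_ind.
rewrite exchange_big /= -[RHS]IH; apply: eq_bigr => v _.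
by rewrite -mulr_sumr Hrow mulr1.
Qed.

Lemma dist_le1 x n y : D x n y <= 1.
Proof.
rewrite -(dist_sum1 x n) (bigD1 y) //= lerDl.
by apply: sumr_ge0 => v _; apply: dist_ge0.
Qed.

Lemma trans_sink s : is_sink_kind (gkind G s) -> T s s = 1.
Proof. by rewrite /trans; case: (gkind G s) => //= _; rewrite eqxx. Qed.

Lemma Ssum_ge0 x n : 0 <= Ssum x n.
Proof. by apply: sumr_ge0 => s Hs; apply: mulr_ge0; [apply: dist_ge0|apply: Hval]. Qed.

Lemma Ssum_nd x : {homo Ssum x : n m / (n <= m)%N >-> n <= m}.
Proof.
apply: homo_leq; [exact: lexx|by move=> a b c; apply: le_trans|].
move=> n; apply: ler_sum => s Hs; apply: ler_wpM2r; first exact: Hval.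
rewrite /= (bigD1 s) //= trans_sink // mulr1 lerDl.
by apply: sumr_ge0 => v _; apply: mulr_ge0; [apply: dist_ge0|].
Qed.

Lemma Ssum_cvg x : cvgn (Ssum x).
Proof.
apply: nondecreasing_is_cvgn; first exact: Ssum_nd.
exists (\sum_(s | is_sink_kind (gkind G s)) gsval G s) => _ [n _ <-].
apply: ler_sum => s Hs; rewrite -[leRHS]mul1r; apply: ler_wpM2r; first exact: Hval.
exact: dist_le1.
Qed.

Lemma gvalueE x : gvalue G sg tu x = limn (Ssum x).
Proof. by []. Qed.

Lemma Ssum_le x n : Ssum x n <= gvalue G sg tu x.
Proof. rewrite gvalueE; apply: nondecreasing_cvgn_le; [exact: Ssum_nd|exact: Ssum_cvg]. Qed.

Lemma gvalue_ge0 x : 0 <= gvalue G sg tu x.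
Proof. exact: le_trans (Ssum_ge0 x 0) (Ssum_le x 0). Qed.

Definition Z x := forall n s, is_sink_kind (gkind G s) -> D x n s * gsval G s = 0.

Lemma gvalue0_Z x : gvalue G sg tu x = 0 -> Z x.
Proof.
move=> H0 n s Hs.
have HS : Ssum x n = 0 by apply/eqP; rewrite eq_le Ssum_ge0 -H0 Ssum_le.
move: HS; rewrite /Ssum => /psumr_eq0P; apply => //.
move=> i Hi; apply: mulr_ge0; [apply: dist_ge0|exact: Hval].
Qed.

Lemma Z_gvalue0 x : Z x -> gvalue G sg tu x = 0.
Proof.
move=> HZ; rewrite gvalueE.
have -> : Ssum x = fun _ => 0.
  by apply: funext => n; rewrite /Ssum big1 // => s Hs; apply: HZ.
by rewrite lim_cst.
Qed.

Lemma distS x n y : D x n.+1 y = \sum_v D x n v * T v y.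
Proof. by []. Qed.

Lemma CK x n y : D x n.+1 y = \sum_w T x w * D w n y.
Proof.
elim: n y => [|n IH] y; rewrite distS.
  rewrite (bigD1 x) //= eqxx mul1r big1 ?addr0.
    rewrite (bigD1 y) //= eqxx mulr1 big1 ?addr0 // => w /negPf.
    by rewrite eq_sym => ->; rewrite mulr0.
  by move=> w /negPf; rewrite eq_sym => ->; rewrite mul0r.
transitivity (\sum_v (\sum_w T x w * D w n v) * T v y).
  by apply: eq_bigr => v _; rewrite IH.
under eq_bigr do rewrite mulr_suml.
rewrite exchange_big /=; apply: eq_bigr => w _.
by rewrite mulr_sumr; apply: eq_bigr => v _; rewrite mulrA.
Qed.

Lemma Z_step x w : Z x -> T x w != 0 -> Z w.
Proof.
move=> HZ Hw n s Hs.
have := HZ n.+1 s Hs; rewrite CK mulr_suml => /psumr_eq0P H.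
have Hp : forall v, true -> 0 <= T x v * D v n s * gsval G s.
  move=> v _; rewrite -mulrA; apply: mulr_ge0 => //; apply: mulr_ge0; [apply: dist_ge0|exact: Hval].
have := H Hp w isT; rewrite -mulrA => /eqP; rewrite mulf_eq0 (negPf Hw) /=.
by move/eqP.
Qed.
Lemma closure (P : V -> Prop) :
  (forall x w, P x -> T x w != 0 -> P w) ->
  (forall x, P x -> is_sink_kind (gkind G x) -> gsval G x = 0) ->
  forall x, P x -> Z x.
Proof.
move=> Hc Hs x Px.
have Hr : forall n y, D x n y != 0 -> P y.
  elim=> [|n IH] y.
    by rewrite /=; case: (eqVneq x y) => [<- //|_]; rewrite mulr0n eqxx.
  rewrite distS => Hy.
  have [v Hv]: exists v, D x n v * T v y != 0.
    apply/existsP; apply: contraNT Hy; rewrite negb_exists => /forallP H.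
    by apply/eqP; apply: big1 => v _; apply/eqP; move: (H v); rewrite negbK.
  move: Hv; rewrite mulf_eq0 negb_or => /andP[H1 H2]; exact: Hc (IH _ H1) H2.
move=> n s Hsk; case: (eqVneq (D x n s) 0) => [->|Hd]; first by rewrite mul0r.
by rewrite Hs ?mulr0 //; apply: Hr Hd.
Qed.

Lemma Z_sink x : Z x -> is_sink_kind (gkind G x) -> gsval G x = 0.
Proof. by move=> HZ Hs; have := HZ 0%N x Hs; rewrite /= eqxx mul1r. Qed.
End Gen.

Lemma ind_neq0 (R : realType) (T : eqType) (a b : T) : ((a == b)%:R : R) != 0 -> a = b.
Proof. by case: (eqVneq a b) => // _; rewrite mulr0n eqxx. Qed.

Lemma ind_sum1 (R : realType) (T : finType) (c : T) : \sum_(b : T) ((c == b)%:R : R) = 1.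
Proof.
rewrite (bigD1 c) //= eqxx big1 ?addr0 // => y /negPf.
by rewrite eq_sym => ->.
Qed.

Section Ssg.
Variables (R : realType) (V : finType) (G : ssg R V).
Hypothesis HG : is_ssg G.

Lemma gprob_ge0 x y : gkind G x = VRand -> 0 <= gprob G x y.
Proof.
move=> Hk; have [_ _ _ Hr _] := HG; have [Hp Hz _ _] := Hr x Hk.
by case: (boolP (garc G x y)) => Ha; [exact: ltW (Hp _ Ha)|rewrite Hz].
Qed.

Lemma gprob_sum x : gkind G x = VRand -> \sum_y gprob G x y = 1.
Proof.
move=> Hk; have [_ _ _ Hr _] := HG; have [Hp Hz Hs _] := Hr x Hk.
by rewrite (bigID (garc G x)) /= Hs big1 ?addr0 // => y /Hz.
Qed.

Lemma ssg_nn sg tu x y : 0 <= trans G sg tu x y.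
Proof. by rewrite /trans; case Hk: (gkind G x) => //; exact: gprob_ge0. Qed.

Lemma ssg_row sg tu x : \sum_y trans G sg tu x y = 1.
Proof. by rewrite /trans; case Hk: (gkind G x); rewrite ?ind_sum1 ?gprob_sum. Qed.

Lemma ssg_val s : is_sink_kind (gkind G s) -> 0 <= gsval G s.
Proof.
move=> Hs; have [_ _ _ _ Hv] := HG.
by case: (gkind G s) Hs (Hv s) => // _ /(_ erefl) [].
Qed.

Variables (A : {set V * V}) (f : V * V -> R).
Hypothesis Hf : forall e, 0 <= f e.
Local Notation G' := (transform G A f).

Lemma tr_nn sg tu a b : 0 <= trans G' sg tu a b.
Proof.
case: a => [u|e]; rewrite /trans //=.
case Hk: (gkind G u) => //; case: b => [w|e] /=; case: ifP => // _; exact: gprob_ge0.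
Qed.

Lemma tr_row sg tu a : \sum_b trans G' sg tu a b = 1.
Proof.
case: a => [u|e]; rewrite /trans /=; last exact: ind_sum1.
case Hk: (gkind G u); rewrite ?ind_sum1 //.
rewrite big_sumType /=.
have -> : \sum_(e : {e : V * V | e \in A}) (if (val e).1 == u then gprob G u (val e).2 else 0)
   = \sum_(p in A) (if p.1 == u then gprob G u p.2 else 0).
  by rewrite [RHS]big_sub.
have -> : \sum_(p in A) (if p.1 == u then gprob G u p.2 else 0)
   = \sum_(p : V * V) (if p.1 == u then (if (u, p.2) \in A then gprob G u p.2 else 0) else 0).
  rewrite big_mkcond; apply: eq_bigr => [[a b]] _ /=.
  by case: eqP => [->|]; case: ifP.
rewrite -(pair_bigA _ (fun a b => if a == u then (if (u, b) \in A then gprob G u b else 0) else 0)) /=.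
rewrite [X in _ + X](bigD1 u) //= eqxx.
rewrite [X in _ + (_ + X)]big1 ?addr0; last by move=> a Ha; rewrite (negPf Ha) big1.
rewrite -big_split /= -(gprob_sum Hk); apply: eq_bigr => w _.
by case: ifP; rewrite ?add0r ?addr0.
Qed.

Lemma tr_val s : is_sink_kind (gkind G' s) -> 0 <= gsval G' s.
Proof. by case: s => [u|e] //= Hs; exact: ssg_val. Qed.
End Ssg.

Lemma lift_cases (V : finType) (A : {set V * V}) (rho : V -> V) u :
  (exists2 e : {e : V * V | e \in A}, lift_strategy A rho (inl u) = inr e & val e = (u, rho u))
  \/ lift_strategy A rho (inl u) = inl (rho u).
Proof.
rewrite /lift_strategy; case: insubP => [e _ He|_]; [left; exists e => //|by right].
Qed.

Lemma lift_min (R : realType) (V : finType) (G : ssg R V) (A : {set V * V}) f tau :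
  is_min_strategy G tau -> is_min_strategy (transform G A f) (lift_strategy A tau).
Proof.
move=> Ht [u|e] //= Hk.
rewrite /lift_strategy; case: insubP => [e _ He|Hn] /=; first by rewrite He.
by rewrite Ht // Hn.
Qed.

Theorem lemma11 (R : realType) (V : finType) (G : ssg R V) (A : {set V * V})
    (sigma tau : V -> V) (tau' : tvert A -> tvert A) :
  is_ssg G ->
  (forall e, e \in A -> garc G e.1 e.2) ->
  is_max_strategy G sigma ->
  best_response G sigma tau ->
  best_response (transform G A (fun e => gvalue G sigma tau e.2))
                (lift_strategy A sigma) tau' ->
  forall x : V,
    gvalue G sigma tau x = 0 <->
    gvalue (transform G A (fun e => gvalue G sigma tau e.2))
          (lift_strategy A sigma) tau' (inl x) = 0.
Proof.
move=> HG HA Hsig [Htau Hbr] [Htau' Hbr'] x.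
set f := (fun e => gvalue G sigma tau e.2).
have Hv0 : forall y, 0 <= gvalue G sigma tau y.
  by move=> y; apply: gvalue_ge0; [exact: ssg_nn|exact: ssg_row|exact: ssg_val].
have Hf : forall e, 0 <= f e by move=> e; apply: Hv0.
have K2Z : forall t y, gvalue G sigma t y = 0 -> Z G sigma t y.
  by move=> t y; apply: gvalue0_Z; [exact: ssg_nn|exact: ssg_row|exact: ssg_val].
have Z2K : forall t y, Z G sigma t y -> gvalue G sigma t y = 0.
  by move=> t y; apply: Z_gvalue0.
have ZstepG : forall t y w, Z G sigma t y -> trans G sigma t y w != 0 -> Z G sigma t w.
  by move=> t y w; apply: Z_step; [exact: ssg_nn|exact: ssg_val].
have ZstepG' : forall t a b, Z (transform G A f) (lift_strategy A sigma) t a ->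
    trans (transform G A f) (lift_strategy A sigma) t a b != 0 ->
    Z (transform G A f) (lift_strategy A sigma) t b.
  by move=> t a b; apply: Z_step; [exact: tr_nn|exact: tr_val].
have K2Z' : forall t a, gvalue (transform G A f) (lift_strategy A sigma) t a = 0 ->
    Z (transform G A f) (lift_strategy A sigma) t a.
  by move=> t a; apply: gvalue0_Z; [exact: tr_nn|exact: tr_row|exact: tr_val].
have Hge0' : forall t a, 0 <= gvalue (transform G A f) (lift_strategy A sigma) t a.
  by move=> t a; apply: gvalue_ge0; [exact: tr_nn|exact: tr_row|exact: tr_val].
split => Hx.
-
  pose t2 := lift_strategy A tau.
  have Ht2 : is_min_strategy (transform G A f) t2 by exact: lift_min.
  have HZ : Z (transform G A f) (lift_strategy A sigma) t2 (inl x).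
    apply: (closure (P := fun a => match a with
                  | inl u => Z G sigma tau u | inr e => Z G sigma tau (val e).2 end)).
    + move=> [u|e] b /= Pu; rewrite /trans /=; last by move/ind_neq0 <-.
      case Hk: (gkind G u).
      * move/ind_neq0 <-.
        case: insubP => [e _ He|_] /=; last by apply: ZstepG Pu _; rewrite /trans Hk eqxx oner_neq0.
        by move: He => /= ->; apply: ZstepG Pu _; rewrite /trans Hk eqxx oner_neq0.
      * move/ind_neq0 <-.
        case: insubP => [e _ He|_] /=; last by apply: ZstepG Pu _; rewrite /trans Hk eqxx oner_neq0.
        by move: He => /= ->; apply: ZstepG Pu _; rewrite /trans Hk eqxx oner_neq0.
      * case: b => [w|e] /=; case: ifP => _ H; rewrite ?eqxx in H => //; apply: ZstepG Pu _; by rewrite /trans Hk.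
      * by move/ind_neq0 <-.
    + move=> [u|e] /= Pu Hs; first exact: Z_sink Pu Hs.
      by rewrite /f; apply: Z2K.
    + by apply: K2Z.
  apply/eqP; rewrite eq_le Hge0' andbT.
  have -> : 0 = gvalue (transform G A f) (lift_strategy A sigma) t2 (inl x) by symmetry; apply: Z_gvalue0.
  exact: Hbr'.
-
  pose t1 u := if gvalue G sigma tau u == 0 then tau u
               else match tau' (inl u) with inl w => w | inr e => (val e).2 end.
  have Ht1 : is_min_strategy G t1.
    move=> u Hk; rewrite /t1; case: ifP => _; first exact: Htau.
    have := Htau' (inl u) Hk; case: (tau' (inl u)) => [w|e] /=; first by case/andP.
    by move/eqP <-; apply: HA (valP e).
  have HZ : Z G sigma t1 x.
    apply: (closure (P := fun u => gvalue G sigma tau u = 0 \/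
                     Z (transform G A f) (lift_strategy A sigma) tau' (inl u))).
    + move=> u w Pu Hw.
      case: (boolP (gvalue G sigma tau u == 0)) => Ku.
        left; apply: Z2K; apply: ZstepG (K2Z _ _ (eqP Ku)) _.
        move: Hw; rewrite /trans /t1 Ku; by case: (gkind G u).
      case: Pu => [K|Z']; first by rewrite K eqxx in Ku.
      move: Hw; rewrite /trans; case Hk: (gkind G u).
      * move/ind_neq0 <-.
        have Z1 : Z (transform G A f) (lift_strategy A sigma) tau' (lift_strategy A sigma (inl u)).
          by apply: ZstepG' Z' _; rewrite /trans /= Hk eqxx oner_neq0.
        move: Z1; rewrite /lift_strategy; case: insubP => [e0 _ He|_] Z1; last by right.
        left; have := Z_sink Z1 isT; move: He => /= He; by rewrite /= /f He.
      * move/ind_neq0 <-; rewrite /t1 (negPf Ku).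
        have Z1 := ZstepG' _ _ (tau' (inl u)) Z'.
        have {}Z1 : Z (transform G A f) (lift_strategy A sigma) tau' (tau' (inl u)).
          by apply: Z1; rewrite /trans /= Hk eqxx oner_neq0.
        case: (tau' (inl u)) Z1 => [w'|e] Z1; first by right.
        by left; have := Z_sink Z1 isT.
      * move=> Hg; case: (boolP ((u, w) \in A)) => HuA.
          left; pose e : {e : V * V | e \in A} := exist _ (u, w) HuA.
          have Z1 : Z (transform G A f) (lift_strategy A sigma) tau' (inr e).
            by apply: ZstepG' Z' _; rewrite /trans /= Hk eqxx.
          by have := Z_sink Z1 isT.
        right; apply: ZstepG' Z' _; by rewrite /trans /= Hk (negPf HuA).
      * by move/ind_neq0 <-; right.
    + move=> u [K|Z'] Hs; first exact: Z_sink (K2Z _ _ K) Hs.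
      by have := Z_sink Z' Hs.
    + by right; apply: K2Z'.
  apply/eqP; rewrite eq_le Hv0 andbT.
  have -> : 0 = gvalue G sigma t1 x by symmetry; apply: Z2K.
  exact: Hbr.
Qed.
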